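(* Every factorization curve $\psi_j:\mathbb{P}(V_j)\to\mathbb{P}(\mathfrak{h})$ of a complex factorization structure $\varphi:\mathfrak{h}\to V^*$ is injective.
   Context: $V_1,\ldots,V_m$ are 2-dimensional complex vector spaces, $V^*=V_1^*\otimes\cdots\otimes V_m^*$, $\ell^0$ the annihilator of a line $\ell$, and $\Sigma^0_{j,\ell}=V_1^*\otimes\cdots\otimes\ell^0\otimes\cdots\otimes V_m^*$ ($\ell^0$ in slot $j$). A factorization structure of dimension $m$ is an injective linear map $\varphi:\mathfrak{h}\to V^*$, $\dim\mathfrak{h}=m+1$, with $\dim(\varphi(\mathfrak{h})\cap\Sigma^0_{j,\ell})=1$ for all $j$ and all $\ell$ in a nonempty Zariski-open subset of $\mathbb{P}(V_j)$. The $j$-th factorization curve $\psi_j$ is the unique regular extension to $\mathbb{P}(V_j)$ of the generically defined regular map $\ell\mapsto\varphi^{-1}(\varphi(\mathfrak{h})\cap\Sigma^0_{j,\ell})$. *)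

(* Defs.v *)
From HB Require Import structures.
From mathcomp Require Import all_boot all_order all_algebra.
From mathcomp Require Import reals.
From mathcomp.real_closed Require Import complex.

Set Implicit Arguments.
Unset Strict Implicit.
Unset Printing Implicit Defensive.

Import Order.TTheory GRing.Theory Num.Theory.
Local Open Scope ring_scope.

(* Conventions:
   - the complex numbers are R[i] for R : realType (the real numbers);
   - V_j = C^2 (row vectors 'rV_2), a point of P(V_j) is a nonzero u : 'rV_2,
     two representatives give the same point iff (u == v)%MS (same row space);
   - h = C^(m+1) ('rV_(m.+1)), a point of P(h) is a nonzero x : 'rV_(m.+1);
   - V^* = V_1^* (x) ... (x) V_m^* has coordinates T I, I : {ffun 'I_m -> 'I_2},
     w.r.t. the tensor products of the dual bases. *)

Section FactStruct.
Variable C : fieldType.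

Definition midx (m : nat) := {ffun 'I_m -> 'I_2}.

Definition tensor (m : nat) := midx m -> C.

Definition setj (m : nat) (I : midx m) (j : 'I_m) (k : 'I_2) : midx m :=
  [ffun i => if i == j then k else I i].

(* the covector beta_u spanning the annihilator l^0 of the line l = [u]:
   beta_u(e_0) = u_1, beta_u(e_1) = - u_0, so beta_u(u) = 0 *)
Definition annih (u : 'rV[C]_2) (k : 'I_2) : C :=
  if k == 0 then u 0 1 else - u 0 0.

(* Sigma^0_{j,l} = V_1^* (x) .. (x) l^0 (x) .. (x) V_m^*, l = [u]:
   the tensors beta_u (x)_j S with S a tensor in the remaining m-1 factors
   (S is encoded as a tensor not depending on slot j). *)
Definition Sigma0 (m : nat) (j : 'I_m) (u : 'rV[C]_2) (T : tensor m) : Prop :=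
  exists S : tensor m,
    (forall I k, S (setj I j k) = S I) /\
    (forall I, T I = annih u (I j) * S I).

(* phi : h -> V^* is linear; it is encoded by the column vectors
   c I : 'cV_(m+1) with  (phi x) I = (x *m c I) 0 0. *)
Definition phimap (m : nat) (c : midx m -> 'cV[C]_(m.+1))
  (x : 'rV[C]_(m.+1)) : tensor m := fun I => (x *m c I) 0 0.

Definition phi_injective (m : nat) (c : midx m -> 'cV[C]_(m.+1)) : Prop :=
  forall x y : 'rV[C]_(m.+1), phimap c x = phimap c y -> x = y.

Definition preimSigma (m : nat) (c : midx m -> 'cV[C]_(m.+1)) (j : 'I_m)
  (u : 'rV[C]_2) (x : 'rV[C]_(m.+1)) : Prop :=
  Sigma0 j u (phimap c x).

Definition dim_one (n : nat) (P : 'rV[C]_n -> Prop) : Prop :=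
  exists x, [/\ x != 0, P x & forall y, P y -> exists a : C, y = a *: x].

(* Zariski-open subsets of P^1: complements of finite sets (or empty).
   [in_cofinite F u]: u represents a point of P^1 not in the finite set F *)
Definition in_cofinite (F : seq 'rV[C]_2) (u : 'rV[C]_2) : Prop :=
  u != 0 /\ forall v, v \in F -> ~~ (u == v)%MS.

Definition is_fact_struct (m : nat) (c : midx m -> 'cV[C]_(m.+1)) : Prop :=
  phi_injective c /\
  forall j : 'I_m, exists F : seq 'rV[C]_2,
    forall u, in_cofinite F u -> dim_one (preimSigma c j u).

Definition bform (d : nat) (a : 'rV[C]_(d.+1)) (u : 'rV[C]_2) : C :=
  \sum_(k < d.+1) a 0 k * u 0 0 ^+ k * u 0 1 ^+ (d - k).

(* regular maps P^1 -> P^(n-1), given on representatives: well defined on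
   points, and locally (on a Zariski-open neighbourhood of each point) given by
   n homogeneous polynomials of a common degree with no common zero there. *)
Definition regular_P1 (n : nat) (psi : 'rV[C]_2 -> 'rV[C]_n) : Prop :=
  [/\ forall u, u != 0 -> psi u != 0,
      forall u v, u != 0 -> (u == v)%MS -> (psi u == psi v)%MS &
      forall u0, u0 != 0 ->
        exists (d : nat) (a : 'I_n -> 'rV[C]_(d.+1)) (F : seq 'rV[C]_2),
          in_cofinite F u0 /\
          forall u, in_cofinite F u ->
            let p := \row_(i < n) bform (a i) u in
            p != 0 /\ (psi u == p)%MS].

(* psi is a j-th factorization curve: a regular map P(V_j) -> P(h) extending
   the generically defined map l |-> phi^{-1}(phi(h) cap Sigma^0_{j,l}), i.e.
   agreeing with it on a nonempty Zariski-open subset of P(V_j). *)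
Definition is_fact_curve (m : nat) (c : midx m -> 'cV[C]_(m.+1)) (j : 'I_m)
  (psi : 'rV[C]_2 -> 'rV[C]_(m.+1)) : Prop :=
  regular_P1 psi /\
  exists F : seq 'rV[C]_2, forall u, in_cofinite F u ->
    dim_one (preimSigma c j u) /\ preimSigma c j u (psi u).

End FactStruct.

(* Main.v *)
Require Import Defs.
From HB Require Import structures.
From mathcomp Require Import all_boot all_order all_algebra.
From mathcomp Require Import ring.
From mathcomp Require Import reals.
From mathcomp.real_closed Require Import complex.
From Stdlib Require Import FunctionalExtensionality.
Set Implicit Arguments. Unset Strict Implicit. Unset Printing Implicit Defensive.
Import Order.TTheory GRing.Theory Num.Theory.
Local Open Scope ring_scope.

Section L.
Variable C : numFieldType.

Definition det2 (u v : 'rV[C]_2) := u 0 0 * v 0 1 - u 0 1 * v 0 0.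

Lemma ord2_cases (k : 'I_2) : k = 0 \/ k = 1.
Proof. case: k => [[|[|//]]] Hk; [left|right]; exact: val_inj. Qed.

Lemma eq_det2 (u v : 'rV[C]_2) : (u == v)%MS -> det2 u v = 0.
Proof.
case/andP => /sub_rVP [a ->] _; rewrite /det2 !mxE; ring.
Qed.

Lemma det2_sub (u v : 'rV[C]_2) : v != 0 -> det2 u v = 0 -> (u <= v)%MS.
Proof.
move=> vn0 hd; apply/sub_rVP.
have [v0|v0] := eqVneq (v 0 0) 0.
- have v1 : v 0 1 != 0.
    apply/negP => /eqP v1; move/negP: vn0; apply; apply/eqP/rowP => k; rewrite mxE.
    by case: (ord2_cases k) => ->.
  exists (u 0 1 / v 0 1); apply/rowP => k; rewrite !mxE.
  case: (ord2_cases k) => ->.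
  + rewrite v0 mulr0; move: hd; rewrite /det2 v0 mulr0 subr0 => /eqP.
    by rewrite mulf_eq0 (negPf v1) orbF => /eqP.
  + by rewrite divfK.
- exists (u 0 0 / v 0 0); apply/rowP => k; rewrite !mxE.
  case: (ord2_cases k) => ->.
  + by rewrite divfK.
  + apply: (mulIf v0); rewrite -mulrA (mulrC (v 0 1)) mulrA divfK //.
    by move/eqP: hd; rewrite /det2 subr_eq0 => /eqP ->; rewrite mulrC.
Qed.

Lemma det2_cramer (u w v : 'rV[C]_2) :
  det2 u w != 0 -> det2 u v = 0 -> det2 w v = 0 -> v = 0.
Proof.
move=> hd e1 e2.
have h0 : v 0 0 * det2 u w = w 0 0 * det2 u v - u 0 0 * det2 w v
  by rewrite /det2; ring.
have h1 : v 0 1 * det2 u w = w 0 1 * det2 u v - u 0 1 * det2 w v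
  by rewrite /det2; ring.
rewrite e1 e2 !mulr0 subrr in h0 h1.
apply/rowP => k; rewrite mxE; case: (ord2_cases k) => ->.
- by move/eqP: h0; rewrite mulf_eq0 (negPf hd) orbF => /eqP.
- by move/eqP: h1; rewrite mulf_eq0 (negPf hd) orbF => /eqP.
Qed.

Lemma poly_all0 (Q : {poly C}) : (forall t, Q.[t] = 0) -> Q = 0.
Proof.
move=> h; apply/eqP; apply/negPn/negP => hQ.
have H1 : all (root Q) [seq (k%:R : C) | k <- iota 0 (size Q)].
  by apply/allP => x _; apply/eqP/h.
have H2 : uniq [seq (k%:R : C) | k <- iota 0 (size Q)].
  rewrite map_inj_uniq ?iota_uniq // => a b /eqP; rewrite eqr_nat => /eqP.
  done.
by have := max_poly_roots hQ H1 H2; rewrite size_map size_iota ltnn.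
Qed.

Lemma poly_cof (u0 w : 'rV[C]_2) (G : seq 'rV[C]_2) (g : 'rV[C]_2 -> C)
  (q : {poly C}) :
  det2 u0 w != 0 -> (forall t, q.[t] = g (u0 + t *: w)) ->
  (forall u, in_cofinite G u -> g u = 0) -> g u0 = 0.
Proof.
move=> hd hq hg.
pose Lv v : {poly C} := (det2 u0 v)%:P + (det2 w v) *: 'X.
have HL : forall v t, (Lv v).[t] = det2 (u0 + t *: w) v.
  by move=> v t; rewrite /Lv hornerD hornerZ hornerX hornerC /det2 !mxE; ring.
pose Q := q * \prod_(v <- G | v != 0) Lv v.
have HQ : forall t, Q.[t] = 0.
  move=> t; rewrite /Q hornerM horner_prod.
  have [->|hne] := eqVneq (\prod_(v <- G | v != 0) (Lv v).[t]) 0; first by rewrite mulr0.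
  rewrite hq hg ?mul0r //; split.
  + apply/negP => /eqP h0; move/negP: hd; apply; apply/eqP.
    have : det2 (u0 + t *: w) w = det2 u0 w by rewrite /det2 !mxE; ring.
    by rewrite h0 /det2 !mxE => <-; rewrite !mul0r subrr.
  + move=> v vG; move: hne; rewrite prodf_seq_neq0 => /allP /(_ v vG).
    have [-> _|vn0 /=] := eqVneq v 0.
    * apply/negP => /andP [/submx0null h0 _].
      have : det2 (u0 + t *: w) w = det2 u0 w by rewrite /det2 !mxE; ring.
      by rewrite h0 /det2 !mxE !mul0r subrr => /esym/eqP; rewrite (negPf hd).
    * by rewrite HL; apply: contra => /eq_det2 ->.
have Q0 := poly_all0 HQ.
move/eqP: Q0; rewrite /Q mulf_eq0 => /orP [/eqP q0|].
- by rewrite -(addr0 u0) -(scale0r w) -hq q0 horner0.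
- rewrite prodf_seq_eq0 => /hasP [v _ /andP [vn0 /eqP L0]].
  exfalso; move/negP: vn0; apply; apply/eqP.
  apply: (det2_cramer hd).
  + by move: (HL v 0); rewrite L0 horner0 scale0r addr0.
  + have e0 : det2 u0 v = 0 by move: (HL v 0); rewrite L0 horner0 scale0r addr0.
    move: (HL v 1); rewrite L0 horner0 => /esym; rewrite /det2 !mxE => h.
    move: e0; rewrite /det2 => e0.
    have -> : w 0 0 * v 0 1 - w 0 1 * v 0 0 =
      (u0 0 0 + 1 * w 0 0) * v 0 1 - (u0 0 1 + 1 * w 0 1) * v 0 0
      - (u0 0 0 * v 0 1 - u0 0 1 * v 0 0) by ring.
    by rewrite h e0 subrr.
Qed.

End L.
Section M.
Variable C : numFieldType.
Variables (m : nat) (c : midx m -> 'cV[C]_(m.+1)) (j : 'I_m).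

Definition condx (x : 'rV[C]_(m.+1)) (u : 'rV[C]_2) (I : midx m) :=
  u 0 0 * phimap c x (setj I j 0) + u 0 1 * phimap c x (setj I j 1) = 0.

Lemma setj_j (I : midx m) k : setj I j k j = k.
Proof. by rewrite /setj ffunE eqxx. Qed.

Lemma setj_setj (I : midx m) k k' : setj (setj I j k) j k' = setj I j k'.
Proof. by apply/ffunP => i; rewrite !ffunE; case: eqP. Qed.

Lemma setj_self (I : midx m) : setj I j (I j) = I.
Proof. by apply/ffunP => i; rewrite !ffunE; case: eqP => [->|]. Qed.

Lemma sigma_cond x u : Sigma0 j u (phimap c x) -> forall I, condx x u I.
Proof.
case=> S [hS hT] I; rewrite /condx !hT !setj_j !hS /annih /=.
simpl; ring.
Qed.

Lemma phimapZ b x J : phimap c (b *: x) J = b * phimap c x J.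
Proof. by rewrite /phimap -scalemxAl mxE. Qed.

Lemma cond_scale x u I b : condx x u I -> condx (b *: x) u I.
Proof.
rewrite /condx /phimap -!scalemxAl !mxE => h.
by rewrite mulrCA (mulrCA (u 0 1)) -mulrDr h mulr0.
Qed.


Lemma step1 (psi : 'rV[C]_2 -> 'rV[C]_(m.+1)) :
  is_fact_curve c j psi -> forall u0, u0 != 0 -> forall I, condx (psi u0) u0 I.
Proof.
case=> [[_ _ hreg] [F hF]] u0 u0n0 I.
pose w : 'rV[C]_2 :=
  \row_k (if u0 0 0 == 0 then (k == 0)%:R else (k == 1)%:R).
have hw : det2 u0 w != 0.
  rewrite /det2 /w !mxE /=.
  have [h0|h0] := eqVneq (u0 0 0) 0.
  - rewrite mulr0 sub0r mulr1 oppr_eq0.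
    apply/negP => /eqP h1; move/negP: u0n0; apply; apply/eqP/rowP => k.
    by rewrite mxE; case: (ord2_cases k) => ->.
  - by rewrite mulr1 mulr0 subr0.
have [d [a [F' [hcof H]]]] := hreg u0 u0n0.
pose p (u : 'rV[C]_2) := \row_(i < m.+1) bform (a i) u.
pose g (u : 'rV[C]_2) :=
  u 0 0 * phimap c (p u) (setj I j 0) + u 0 1 * phimap c (p u) (setj I j 1).
pose X0 : {poly C} := (u0 0 0)%:P + (w 0 0) *: 'X.
pose X1 : {poly C} := (u0 0 1)%:P + (w 0 1) *: 'X.
pose bP (i : 'I_m.+1) : {poly C} :=
  \sum_(k < d.+1) (a i 0 k)%:P * X0 ^+ k * X1 ^+ (d - k).
pose phP J : {poly C} := \sum_(r < m.+1) bP r * (c J r 0)%:P.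
pose q := X0 * phP (setj I j 0) + X1 * phP (setj I j 1).
have hX0 : forall t, X0.[t] = (u0 + t *: w) 0 0.
  by move=> t; rewrite /X0 hornerD hornerZ hornerX hornerC !mxE mulrC.
have hX1 : forall t, X1.[t] = (u0 + t *: w) 0 1.
  by move=> t; rewrite /X1 hornerD hornerZ hornerX hornerC !mxE mulrC.
have hb : forall t i, (bP i).[t] = bform (a i) (u0 + t *: w).
  move=> t i; rewrite /bP horner_sum /bform; apply: eq_bigr => k _.
  by rewrite !hornerM hornerC !horner_exp hX0 hX1.
have hph : forall t J, (phP J).[t] = phimap c (p (u0 + t *: w)) J.
  move=> t J; rewrite /phP horner_sum /phimap !mxE; apply: eq_bigr => r _.
  by rewrite hornerM hornerC hb !mxE.
have hq : forall t, q.[t] = g (u0 + t *: w).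
  by move=> t; rewrite /q hornerD !hornerM hX0 hX1 !hph.
have hg : forall u, in_cofinite (F ++ F') u -> g u = 0.
  move=> u [un0 hu].
  have hF1 : in_cofinite F u by split => // v vF; apply: hu; rewrite mem_cat vF.
  have hF2 : in_cofinite F' u
    by split => // v vF; apply: hu; rewrite mem_cat vF orbT.
  have [_ hs] := hF u hF1.
  have hc := sigma_cond hs I.
  have [_ /andP [_ /sub_rVP [b hb']]] := H u hF2.
  by have := cond_scale b hc; rewrite -hb'.
have g0 := poly_cof hw hq hg.
have [_ /andP [/sub_rVP [b hb'] _]] := H u0 hcof.
rewrite hb'; apply: cond_scale; exact: g0.
Qed.

End M.

Lemma main_gen (C : numFieldType) (m : nat)
  (c : midx m -> 'cV[C]_(m.+1)) (j : 'I_m)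
  (psi : 'rV[C]_2 -> 'rV[C]_(m.+1)) :
  is_fact_struct c -> is_fact_curve c j psi ->
  forall u v : 'rV[C]_2, u != 0 -> v != 0 ->
    (psi u == psi v)%MS -> (u == v)%MS.
Proof.
move=> [hinj _] hfc u v un0 vn0 /andP [_ /sub_rVP [a ha]].
have hcu := step1 hfc un0; have hcv := step1 hfc vn0.
have [[hnz _ _] _] := hfc.
have [hd|hd] := eqVneq (det2 u v) 0.
  apply/andP; split; apply: det2_sub => //.
  move: hd; rewrite /det2 => h.
  have h' : v 0 0 * u 0 1 - v 0 1 * u 0 0 = - (u 0 0 * v 0 1 - u 0 1 * v 0 0) by ring.
  by rewrite h' h oppr0.
exfalso.
have an0 : a != 0.
  apply/negP => /eqP a0; move/negP: (hnz v vn0); apply; apply/eqP.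
  by rewrite ha a0 scale0r.
pose T := phimap c (psi u).
have hT : forall I, T (setj I j 0) = 0 /\ T (setj I j 1) = 0.
  move=> I; have e1 := hcu I; have e2 := hcv I.
  move: e2; rewrite /condx ha !phimapZ -/T => e2.
  have e2' : v 0 0 * T (setj I j 0) + v 0 1 * T (setj I j 1) = 0.
    apply: (mulfI an0); rewrite mulr0 -{}e2; ring.
  move: e1; rewrite /condx -/T => e1.
  have h0 : T (setj I j 0) * det2 u v =
     v 0 1 * (u 0 0 * T (setj I j 0) + u 0 1 * T (setj I j 1))
   - u 0 1 * (v 0 0 * T (setj I j 0) + v 0 1 * T (setj I j 1))
    by rewrite /det2; ring.
  have h1 : T (setj I j 1) * det2 u v =
     u 0 0 * (v 0 0 * T (setj I j 0) + v 0 1 * T (setj I j 1))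
   - v 0 0 * (u 0 0 * T (setj I j 0) + u 0 1 * T (setj I j 1))
    by rewrite /det2; ring.
  rewrite e1 e2' !mulr0 subrr in h0 h1.
  split.
  - by move/eqP: h0; rewrite mulf_eq0 (negPf hd) orbF => /eqP.
  - by move/eqP: h1; rewrite mulf_eq0 (negPf hd) orbF => /eqP.
have : psi u = 0.
  apply: hinj; apply: functional_extensionality_dep => I.
  have -> : phimap c 0 I = 0 by rewrite /phimap mul0mx mxE.
  rewrite -/T -(setj_self j I).
  by case: (ord2_cases (I j)) => ->; case: (hT I).
by move/eqP; rewrite (negPf (hnz u un0)).
Qed.

Theorem corollary2p7 (R : realType) (m : nat)
  (c : midx m -> 'cV[R[i]]_(m.+1)) (j : 'I_m)
  (psi : 'rV[R[i]]_2 -> 'rV[R[i]]_(m.+1)) :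
  is_fact_struct c -> is_fact_curve c j psi ->
  forall u v : 'rV[R[i]]_2, u != 0 -> v != 0 ->
    (psi u == psi v)%MS -> (u == v)%MS.
Proof. exact: main_gen. Qed.
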